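(* Let $F$ be the CDF of a probability measure on $\mathbb{R}$, and for $z\ge0$ define $G_z(x)=\max\{0,F(x)-z\}$ for $x<0$ and $G_z(x)=\min\{1,F(x)+z\}$ for $x\ge0$. Then there exists $z\ge0$ such that $G_z$ is the CDF of a measure in $\mathcal{L}$ that minimizes $\sup_{x\in\mathbb{R}}|F(x)-G(x)|$ over all CDFs $G$ of measures in $\mathcal{L}$.
   Context: $\epsilon>0$, $B>0$. $\mathcal{L}=\{\eta\in\mathcal{P}(\mathbb{R}):\mathbb{E}_\eta|X|^{1+\epsilon}\le B\}$, where $\mathcal{P}(\mathbb{R})$ is the set of Borel probability measures on $\mathbb{R}$. *)

(* Defs.v *)
From HB Require Import structures.
From mathcomp Require Import all_boot all_order all_algebra.
From mathcomp Require Import all_classical all_reals all_analysis.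
Set Implicit Arguments. Unset Strict Implicit. Unset Printing Implicit Defensive.
Import Order.TTheory GRing.Theory Num.Theory.
Local Open Scope classical_set_scope.
Local Open Scope ring_scope.

Definition cdfP (R : realType) (mu : probability R R) (x : R) : R :=
  fine (mu `]-oo, x]%classic).

Definition inL (R : realType) (eps B : R) (eta : probability R R) : Prop :=
  (\int[eta]_x ((`|x| `^ (1 + eps))%:E) <= B%:E)%E.

Definition Gz (R : realType) (F : R -> R) (z : R) (x : R) : R :=
  if x < 0 then Num.max 0 (F x - z) else Num.min 1 (F x + z).

Definition kdist (R : realType) (F G : R -> R) : \bar R :=
  ereal_sup [set (`|F x - G x|)%:E | x in [set: R]].

(* Main.v *)
Require Import Defs.
From HB Require Import structures.
From mathcomp Require Import all_boot all_order all_algebra.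
From mathcomp Require Import all_classical all_reals all_analysis.
From mathcomp Require Import lra.
Import Order.TTheory GRing.Theory Num.Theory numFieldNormedType.Exports.
Local Open Scope classical_set_scope.
Local Open Scope ring_scope.
Set Implicit Arguments. Unset Strict Implicit. Unset Printing Implicit Defensive.

Section layer.
Variable R : realType.
Variable p : R.
Hypothesis hp : 0 < p.

Definition Yp (x : R) : R := (Num.max x 0) `^ p.
Definition Zp (x : R) : R := - ((Num.max (- x) 0) `^ p).

Lemma Yp_meas : measurable_fun setT Yp.
Proof.
apply: (measurableT_comp (measurable_realfun.measurable_powR p)).
exact: measurable_realfun.measurable_maxr.
Qed.

Lemma Zp_meas : measurable_fun setT Zp.
Proof.
apply: measurableT_comp => //.
apply: (measurableT_comp (measurable_realfun.measurable_powR p)).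
by apply: measurable_realfun.measurable_maxr => //.
Qed.

HB.instance Definition _ := isMeasurableFun.Build _ _ R R Yp Yp_meas.
HB.instance Definition _ := isMeasurableFun.Build _ _ R R Zp Zp_meas.

Lemma Yp_ge0 x : 0 <= Yp x. Proof. exact: powR_ge0. Qed.
Lemma Zp_le0 x : Zp x <= 0. Proof. by rewrite /Zp oppr_le0 powR_ge0. Qed.

Lemma normpE x : `|x| `^ p = Yp x + (- Zp x).
Proof.
rewrite /Yp /Zp opprK.
have p0 : p != 0 by rewrite gt_eqF.
have [x0|x0] := leP 0 x.
  have -> : Num.max (- x) 0 = 0 by apply/max_idPr; rewrite oppr_le0.
  rewrite powR0 // addr0.
  by rewrite ger0_norm.
have -> : Num.max (- x) 0 = - x by apply/max_idPl; rewrite oppr_ge0 ltW.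
rewrite powR0 // add0r.
by rewrite ltr0_norm.
Qed.

Let mu := (@lebesgue_measure R).

Lemma layer (eta : probability R R) :
  (\int[eta]_x ((`|x| `^ p)%:E) =
   \int[mu]_(r in `[0%R, +oo[) ccdf (Yp : {RV eta >-> R}) r +
   \int[mu]_(r in `]-oo, 0%R[) cdf (Zp : {RV eta >-> R}) r)%E.
Proof.
transitivity (\int[eta]_x ((Yp x)%:E + (- Zp x)%:E))%E.
  by apply: eq_integral => x _; rewrite normpE.
rewrite ge0_integralD //; last 4 first.
- by move=> x _; rewrite lee_fin Yp_ge0.
- by apply/measurable_realfun.measurable_EFinP; exact: Yp_meas.
- by move=> x _; rewrite lee_fin oppr_ge0 Zp_le0.
- by apply/measurable_realfun.measurable_EFinP; apply: measurableT_comp => //; exact: Zp_meas.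
congr (_ + _)%E.
  by rewrite -(ge0_expectation_ccdf (X := (Yp : {RV eta >-> R}))) ?expectation_def //; exact: Yp_ge0.
have := le0_expectation_cdf (X := (Zp : {RV eta >-> R})) Zp_le0.
rewrite expectation_def => h.
have e : (\int[eta]_x (Zp x)%:E = - \int[eta]_x (- Zp x)%:E)%E.
  rewrite -integral_ge0N; last by move=> x _; rewrite lee_fin oppr_ge0 Zp_le0.
  by apply: eq_integral => x _; rewrite -EFinN opprK.
by move: h; rewrite e => /(congr1 (fun t => - t)%E); rewrite !oppeK.
Qed.
End layer.
Arguments Yp {R}.
Arguments Zp {R}.

Section tails.
Variable R : realType.
Variable p : R.
Hypothesis hp : 0 < p.

Lemma powlt (a b : R) : 0 <= a -> 0 <= b -> (a `^ p < b `^ p) = (a < b).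
Proof.
move=> a0 b0; apply/idP/idP => h.
  rewrite ltNge; apply/negP => ba.
  have := ge0_ler_powR (ltW hp) (x:=b) (y:=a); rewrite !nnegrE => /(_ b0 a0 ba).
  by rewrite leNgt h.
by apply: gt0_ltr_powR => //; rewrite nnegrE.
Qed.

Lemma powle (a b : R) : 0 <= a -> 0 <= b -> (a `^ p <= b `^ p) = (a <= b).
Proof. by move=> a0 b0; rewrite !leNgt powlt. Qed.

Lemma powinvK (r : R) : 0 <= r -> (r `^ p^-1) `^ p = r.
Proof. by move=> r0; rewrite -powRrM mulVf ?gt_eqF // powRr1. Qed.

Lemma ccdfY (eta : probability R R) r : 0 <= r ->
  ccdf (Yp p : {RV eta >-> R}) r = eta `]r `^ p^-1, +oo[%classic.
Proof.
move=> r0; rewrite /ccdf /distribution /=; congr (eta _).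
apply/seteqP; split => x /=; rewrite !in_itv /= !andbT /Yp.
  rewrite -{1}(powinvK r0) powlt ?powR_ge0 ?le_max ?lexx ?orbT //.
  by rewrite lt_max => /orP[//|]; rewrite ltNge powR_ge0.
move=> h; rewrite -(powinvK r0) powlt ?powR_ge0 ?le_max ?lexx ?orbT //.
by rewrite lt_max h.
Qed.

Lemma cdfZ (eta : probability R R) r : r < 0 ->
  cdf (Zp p : {RV eta >-> R}) r = eta `]-oo, - ((- r) `^ p^-1)]%classic.
Proof.
move=> r0; have r0' : 0 <= - r by rewrite oppr_ge0 ltW.
have t0 : 0 < (- r) `^ p^-1 by apply: powR_gt0; rewrite oppr_gt0.
rewrite /cdf /distribution /=; congr (eta _).
apply/seteqP; split => x /=; rewrite !in_itv /= /Zp.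
  rewrite lerNl -{1}(powinvK r0') powle ?powR_ge0 ?le_max ?lexx ?orbT //.
  by rewrite (leNgt _ 0) t0 orbF lerNr.
move=> h; rewrite lerNl -(powinvK r0') powle ?powR_ge0 ?le_max ?lexx ?orbT //.
by rewrite lerNr h.
Qed.

Lemma meas_le (eta : probability R R) a : eta `]-oo, a]%classic = (cdfP eta a)%:E.
Proof. by rewrite /cdfP fineK // fin_num_measure. Qed.

Lemma meas_gt (eta : probability R R) a : eta `]a, +oo[%classic = (1 - cdfP eta a)%:E.
Proof.
have h : (eta `]-oo, a]%classic + eta `]a, +oo[%classic = 1)%E.
  rewrite -measureU //= ?itv_setU_setT ?probability_setT //.
  by rewrite -eq_opE; exact: disjoint_rays.
move: h; rewrite meas_le -[eta `]a, +oo[%classic]fineK ?fin_num_measure //.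
by rewrite -EFinD => -[<-]; rewrite addrC addKr.
Qed.

End tails.

Section cdfPfacts.
Variable R : realType.
Variable eta : probability R R.

Definition idR (x : R) : R := x.
Lemma idR_meas : measurable_fun setT idR.
Proof. exact: measurable_id. Qed.
HB.instance Definition _ := isMeasurableFun.Build _ _ R R idR idR_meas.

Lemma cdfPE r : cdfP eta r = fine (cdf (idR : {RV eta >-> R}) r).
Proof. by []. Qed.

Lemma cdfP_ge0 r : 0 <= cdfP eta r.
Proof. by rewrite -lee_fin -meas_le. Qed.

Lemma cdfP_le1 r : cdfP eta r <= 1.
Proof. by rewrite -lee_fin -meas_le probability_le1. Qed.

Lemma cdfP_nd : {homo cdfP eta : x y / x <= y}.
Proof.
move=> x y xy; rewrite -lee_fin -!meas_le le_measure ?inE //.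
by apply: subitvPr; rewrite bnd_simp.
Qed.

Lemma cdfP_rc : right_continuous (cdfP eta).
Proof.
move=> a; rewrite /cdfP; apply: fine_cvg.
by rewrite fineK ?fin_num_measure//; exact: (@cdf_right_continuous _ _ _ eta (idR : {RV eta >-> R}) a).
Qed.

Lemma cdfP_Ny0 : cdfP eta x @[x --> -oo] --> (0:R).
Proof. exact/fine_cvg/(cvg_cdfNy0 (idR : {RV eta >-> R})). Qed.

Lemma cdfP_y1 : cdfP eta x @[x --> +oo] --> (1:R).
Proof. exact/fine_cvg/(cvg_cdfy1 (idR : {RV eta >-> R})). Qed.

End cdfPfacts.

Section Gsec.
Variable R : realType.

Lemma hmax_cont (z : R) : continuous (fun v : R => Num.max 0 (v - z)).
Proof.
move=> v.
apply: (@continuous_max R R (cst 0) (fun v : R => v - z) v).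
  exact: cst_continuous.
apply: continuousB => //; exact: cst_continuous.
Qed.

Lemma hmin_cont (z : R) : continuous (fun v : R => Num.min 1 (v + z)).
Proof.
move=> v.
apply: (@continuous_min R R (cst 1) (fun v : R => v + z) v).
  exact: cst_continuous.
apply: continuousD => //; exact: cst_continuous.
Qed.

Variable mu : probability R R.
Variable z : R.
Hypothesis z0 : 0 <= z.

Definition Gf : R -> R := Gz (cdfP mu) z.

Lemma Gf_nd : {homo Gf : x y / x <= y}.
Proof.
move=> x y xy; have Fxy := cdfP_nd mu xy.
have Fx0 := cdfP_ge0 mu x; have Fx1 := cdfP_le1 mu x.
have Fy0 := cdfP_ge0 mu y; have Fy1 := cdfP_le1 mu y.
rewrite /Gf /Gz; case: ifPn => x0; case: ifPn => y0.
- by rewrite ge_max !le_max lexx /= lerD2r Fxy !orbT.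
- have h1 : 0 <= cdfP mu y + z by move: Fy0 z0; clear; lra.
  have h2 : cdfP mu x - z <= 1 by move: Fx1 z0; clear; lra.
  have h3 : cdfP mu x - z <= cdfP mu y + z by move: Fxy Fy0 Fx1 z0; clear; lra.
  by rewrite ge_max !le_min ler01 h1 h2 h3.
- by move: x0; rewrite -leNgt => /le_trans/(_ xy); rewrite leNgt; move/negP.
- by rewrite le_min !ge_min lexx /= lerD2r Fxy orbT.
Qed.

Lemma Gf_rc : right_continuous Gf.
Proof.
move=> a; rewrite /Gf /Gz; have [a0|a0] := ltP a 0.
  apply: cvg_trans; last first.
    by apply: (@continuous_cvg _ _ _ (a^'+) _ (cdfP mu) (fun v : R => Num.max 0 (v - z)) (cdfP mu a)); [exact: hmax_cont | exact: cdfP_rc].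
  apply: near_eq_cvg; near=> x.
  rewrite ifT //; near: x; exact: nbhs_right_lt.
apply: cvg_trans; last first.
  by apply: (@continuous_cvg _ _ _ (a^'+) _ (cdfP mu) (fun v : R => Num.min 1 (v + z)) (cdfP mu a)); [exact: hmin_cont | exact: cdfP_rc].
apply: near_eq_cvg; near=> x.
rewrite ifF //; apply/negbTE; rewrite -leNgt.
apply: (le_trans a0); apply: ltW; near: x; exact: nbhs_right_gt.
Unshelve. all: by end_near. Qed.

Lemma Gf_Ny0 : Gf x @[x --> -oo] --> (0:R).
Proof.
have -> : (0:R) = Num.max 0 (0 - z) by rewrite sub0r; apply/esym/max_idPl; rewrite oppr_le0.
apply: cvg_trans; last first.
  by apply: (@continuous_cvg _ _ _ (-oo) _ (cdfP mu) (fun v : R => Num.max 0 (v - z)) 0); [exact: hmax_cont | exact: cdfP_Ny0].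
apply: near_eq_cvg; near=> x.
rewrite /Gf /Gz ifT //; near: x; exact: nbhs_ninfty_lt.
Unshelve. all: by end_near. Qed.

Lemma Gf_y1 : Gf x @[x --> +oo] --> (1:R).
Proof.
have -> : (1:R) = Num.min 1 (1 + z) by apply/esym/min_idPl; rewrite lerDl.
apply: cvg_trans; last first.
  by apply: (@continuous_cvg _ _ _ (+oo) _ (cdfP mu) (fun v : R => Num.min 1 (v + z)) 1); [exact: hmin_cont | exact: cdfP_y1].
apply: near_eq_cvg; near=> x.
rewrite /Gf /Gz ifF //; apply/negbTE; rewrite -leNgt; apply: ltW.
near: x; exact: nbhs_pinfty_gt.
Unshelve. all: by end_near. Qed.

HB.instance Definition _ := isCumulative.Build R _ R Gf Gf_nd Gf_rc.
HB.instance Definition _ := isCumulativeBounded.Build R 0 1 Gf Gf_Ny0 Gf_y1.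

Definition etaG : set R -> \bar R := lebesgue_stieltjes_measure Gf.
HB.instance Definition _ := isMeasure.Build _ R R etaG
  (measure0 (lebesgue_stieltjes_measure Gf))
  (measure_ge0 (lebesgue_stieltjes_measure Gf))
  (@measure_semi_sigma_additive _ _ _ (lebesgue_stieltjes_measure Gf)).
HB.instance Definition _ := Measure_isProbability.Build _ R R etaG
  (probability_setT (lebesgue_stieltjes_measure Gf)).

Lemma cdfP_etaG x : cdfP etaG x = Gf x.
Proof.
rewrite /cdfP.
have := cdf_lebesgue_stieltjes_id Gf x.
by rewrite /cdf /distribution /pushforward => ->.
Qed.

End Gsec.

Ltac mtrans h := let mD := fresh in let Y := fresh in let mY := fresh in
  move=> mD Y mY; apply: measurableI => //; have := h measurableT Y mY;
  rewrite setTI; exact.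

Section main.
Variable R : realType.
Variable p : R.
Hypothesis hp : 0 < p.

Let leb := (@lebesgue_measure R).

Definition mom (eta : probability R R) := (\int[eta]_x ((`|x| `^ p)%:E))%E.

Lemma ccdfYE (eta : probability R R) r : 0 <= r ->
  ccdf (Yp p : {RV eta >-> R}) r = (1 - cdfP eta (r `^ p^-1))%:E.
Proof. by move=> r0; rewrite ccdfY // meas_gt. Qed.

Lemma cdfZE (eta : probability R R) r : r < 0 ->
  cdf (Zp p : {RV eta >-> R}) r = (cdfP eta (- ((- r) `^ p^-1)))%:E.
Proof. by move=> r0; rewrite cdfZ // meas_le. Qed.

Lemma negpt r : r < 0 -> - ((- r) `^ p^-1) < 0.
Proof. by move=> r0; rewrite oppr_lt0 powR_gt0 // oppr_gt0. Qed.

Lemma cmp (eta eta' : probability R R) :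
  (forall s, 0 <= s -> cdfP eta' s <= cdfP eta s) ->
  (forall s, s < 0 -> cdfP eta s <= cdfP eta' s) ->
  (mom eta <= mom eta')%E.
Proof.
move=> hR hL; rewrite /mom !(layer hp); apply: leeD.
  apply: ge0_le_integral => //.
  - mtrans (ccdf_measurable (Yp p : {RV eta >-> R})).
  - mtrans (ccdf_measurable (Yp p : {RV eta' >-> R})).
  move=> r; rewrite /= in_itv /= andbT => r0.
  by rewrite !ccdfYE // lee_fin lerD2l lerN2 hR // powR_ge0.
apply: ge0_le_integral => //.
- mtrans (cdf_measurable (Zp p : {RV eta >-> R})).
- mtrans (cdf_measurable (Zp p : {RV eta' >-> R})).
move=> r; rewrite /= in_itv /= => r0.
by rewrite !cdfZE // lee_fin hL // negpt.
Qed.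

Lemma Gz_close (mu : probability R R) z x : 0 <= z ->
  `|cdfP mu x - Gz (cdfP mu) z x| <= z.
Proof.
move=> z0; have F0 := cdfP_ge0 mu x; have F1 := cdfP_le1 mu x.
move: F0 F1; rewrite /Gz; set c := cdfP mu x.
case: ifP => _.
  have [h|h] := leP 0 (c - z) => F0 F1; rewrite ler_norml.
    have e1 : - z <= c - (c - z) by move: z0; clear; lra.
    have e2 : c - (c - z) <= z by move: z0; clear; lra.
    by rewrite e1 e2.
  have e1 : - z <= c - 0 by move: z0 F0; clear; lra.
  have e2 : c - 0 <= z by move: h; clear; lra.
  by rewrite e1 e2.
have [h|h] := leP 1 (c + z) => F0 F1; rewrite ler_norml.
  have e1 : - z <= c - 1 by move: h; clear; lra.
  have e2 : c - 1 <= z by move: z0 F1; clear; lra.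
  by rewrite e1 e2.
have e1 : - z <= c - (c + z) by move: z0; clear; lra.
have e2 : c - (c + z) <= z by move: z0; clear; lra.
by rewrite e1 e2.
Qed.

Lemma lemA (mu eta' : probability R R) d (d0 : 0 <= d) :
  (forall x, `|cdfP mu x - cdfP eta' x| <= d) ->
  (mom (etaG mu d0) <= mom eta')%E.
Proof.
move=> hd; apply: cmp => s s0; rewrite cdfP_etaG /Gf /Gz.
  rewrite ifF; last by apply/negbTE; rewrite -leNgt.
  have := hd s; rewrite ler_norml => /andP[h1 h2].
  have h3 : cdfP eta' s <= cdfP mu s + d by move: h1; clear; lra.
  by rewrite le_min cdfP_le1 h3.
rewrite ifT //.
have := hd s; rewrite ler_norml => /andP[h1 h2].
have h3 : cdfP mu s - d <= cdfP eta' s by move: h2; clear; lra.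
by rewrite ge_max cdfP_ge0 h3.
Qed.

Lemma mom1 (mu : probability R R) : mom (etaG mu (@ler01 R)) = 0%E.
Proof.
rewrite /mom (layer hp).
rewrite integral0_eq ?add0e; last first.
  move=> r rD; have r0 : 0 <= r by move: rD; rewrite /= in_itv /= andbT.
  rewrite ccdfYE // cdfP_etaG /Gf /Gz ifF; last first.
    by apply/negbTE; rewrite -leNgt powR_ge0.
  have -> : Num.min 1 (cdfP mu (r `^ p^-1) + 1) = 1.
    by apply/min_idPl; rewrite lerDr cdfP_ge0.
  by rewrite subrr.
rewrite integral0_eq //.
move=> r rD; have r0 : r < 0 by move: rD; rewrite /= in_itv.
rewrite cdfZE // cdfP_etaG /Gf /Gz ifT ?negpt //.
have -> : Num.max 0 (cdfP mu (- (- r) `^ p^-1) - 1) = 0.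
  by apply/max_idPl; rewrite subr_le0 cdfP_le1.
by [].
Qed.

Lemma hR_cont (c : R) : continuous (fun v : R => 1 - Num.min 1 (c + v)).
Proof.
move=> v; apply: (@continuousB R R^o R (cst 1) (fun v : R => Num.min 1 (c + v)) v).
  exact: cst_continuous.
apply: (@continuous_min R R (cst 1) (fun v : R => c + v) v).
  exact: cst_continuous.
apply: continuousD => //; exact: cst_continuous.
Qed.

Lemma hL_cont (c : R) : continuous (fun v : R => Num.max 0 (c - v)).
Proof.
move=> v.
apply: (@continuous_max R R (cst 0) (fun v : R => c - v) v).
  exact: cst_continuous.
apply: (@continuousB R R^o R (cst c) (fun v : R => v) v) => //.
exact: cst_continuous.
Qed.

Lemma zcvg (z0 : R) : (z0 + n.+1%:R^-1) @[n --> \oo] --> z0.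
Proof.
rewrite -[X in _ --> X]addr0; apply: cvgD; first exact: cvg_cst.
by rewrite gtr0_cvgV0 ?cvg_shiftS; [exact: cvgr_idn | near=> n].
Unshelve. all: by end_near. Qed.

Lemma lemC (mu : probability R R) z0 (h0 : 0 <= z0) (B : \bar R) :
  (forall n (hn : 0 <= z0 + n.+1%:R^-1), (mom (etaG mu hn) <= B)%E) ->
  (mom (etaG mu h0) <= B)%E.
Proof.
move=> hB.
have hn n : 0 <= z0 + n.+1%:R^-1 by rewrite addr_ge0 // invr_ge0.
have zle n m : (n <= m)%N -> z0 + m.+1%:R^-1 <= z0 + n.+1%:R^-1.
  by move=> nm; rewrite lerD2l lef_pV2 ?posrE // ler_nat ltnS.
pose g n (r : measurableTypeR R) := ccdf (Yp p : {RV etaG mu (hn n) >-> R}) r.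
pose k n (r : measurableTypeR R) := cdf (Zp p : {RV etaG mu (hn n) >-> R}) r.
have gE n r : 0 <= r ->
    g n r = (1 - Num.min 1 (cdfP mu (r `^ p^-1) + (z0 + n.+1%:R^-1)))%:E.
  move=> r0; rewrite /g ccdfYE // cdfP_etaG /Gf /Gz ifF //.
  by apply/negbTE; rewrite -leNgt powR_ge0.
have kE n r : r < 0 ->
    k n r = (Num.max 0 (cdfP mu (- ((- r) `^ p^-1)) - (z0 + n.+1%:R^-1)))%:E.
  by move=> r0; rewrite /k cdfZE // cdfP_etaG /Gf /Gz ifT // negpt.
have gcv r : 0 <= r -> g n r @[n --> \oo] -->
    ccdf (Yp p : {RV etaG mu h0 >-> R}) r.
  move=> r0; rewrite ccdfYE // cdfP_etaG /Gf /Gz ifF; last first.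
    by apply/negbTE; rewrite -leNgt powR_ge0.
  apply: cvg_EFin; first by near=> n; rewrite gE.
  apply: cvg_trans; last first.
    apply: (@continuous_cvg _ _ _ \oo _ (fun n => z0 + n.+1%:R^-1)
      (fun v => 1 - Num.min 1 (cdfP mu (r `^ p^-1) + v)) z0).
      exact: hR_cont.
    exact: zcvg.
  by apply: near_eq_cvg; near=> n; rewrite /= gE.
have kcv r : r < 0 -> k n r @[n --> \oo] -->
    cdf (Zp p : {RV etaG mu h0 >-> R}) r.
  move=> r0; rewrite cdfZE // cdfP_etaG /Gf /Gz ifT ?negpt //.
  apply: cvg_EFin; first by near=> n; rewrite kE.
  apply: cvg_trans; last first.
    apply: (@continuous_cvg _ _ _ \oo _ (fun n => z0 + n.+1%:R^-1)
      (fun v => Num.max 0 (cdfP mu (- ((- r) `^ p^-1)) - v)) z0).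
      exact: hL_cont.
    exact: zcvg.
  by apply: near_eq_cvg; near=> n; rewrite /= kE.
have ndg r : `[0%R, +oo[%classic r -> {homo g^~ r : n m / (n <= m)%N >-> (n <= m)%E}.
  move=> rD n m nm; have r0 : 0 <= r by move: rD; rewrite /= in_itv /= andbT.
  by rewrite !gE // lee_fin lerD2l lerN2 le_min !ge_min lexx /= lerD2l zle // orbT.
have ndk r : `]-oo, 0%R[%classic r -> {homo k^~ r : n m / (n <= m)%N >-> (n <= m)%E}.
  move=> rD n m nm; have r0 : r < 0 by move: rD; rewrite /= in_itv.
  by rewrite !kE // lee_fin ge_max !le_max lexx /= lerD2l lerN2 zle // orbT.
have mc1 : ((\int[leb]_(x in `[0%R, +oo[) g n x) @[n --> \oo] -->
    \int[leb]_(x in `[0%R, +oo[) (fun x0 => limn (g^~ x0)) x)%E.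
  apply: cvg_monotone_convergence.
  - exact: measurable_itv.
  - by move=> n; mtrans (ccdf_measurable (Yp p : {RV etaG mu (hn n) >-> R})).
  - by move=> n r _; apply: measure_ge0.
  - exact: ndg.
have mc2 : ((\int[leb]_(x in `]-oo, 0%R[) k n x) @[n --> \oo] -->
    \int[leb]_(x in `]-oo, 0%R[) (fun x0 => limn (k^~ x0)) x)%E.
  apply: cvg_monotone_convergence.
  - exact: measurable_itv.
  - by move=> n; mtrans (cdf_measurable (Zp p : {RV etaG mu (hn n) >-> R})).
  - by move=> n r _; apply: measure_ge0.
  - exact: ndk.
have e1 : (\int[leb]_(x in `[0%R, +oo[) (fun x0 => limn (g^~ x0)) x =
    \int[leb]_(x in `[0%R, +oo[) ccdf (Yp p : {RV etaG mu h0 >-> R}) x)%E.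
  apply: eq_integral => r rD.
  have r0 : 0 <= r by move: rD; rewrite inE /= in_itv /= andbT.
  exact: (cvg_lim (@ereal_hausdorff R) (gcv r r0)).
have e2 : (\int[leb]_(x in `]-oo, 0%R[) (fun x0 => limn (k^~ x0)) x =
    \int[leb]_(x in `]-oo, 0%R[) cdf (Zp p : {RV etaG mu h0 >-> R}) x)%E.
  apply: eq_integral => r rD.
  have r0 : r < 0 by move: rD; rewrite inE /= in_itv.
  exact: (cvg_lim (@ereal_hausdorff R) (kcv r r0)).
rewrite e1 in mc1; rewrite e2 in mc2.
have S : ((\int[leb]_(x in `[0%R, +oo[) g n x) + (\int[leb]_(x in `]-oo, 0%R[) k n x))%E
    @[n --> \oo] --> mom (etaG mu h0).
  rewrite /mom (layer hp); apply: cvgeD => //; apply: ge0_adde_def; rewrite inE.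
    by apply: integral_ge0 => r rD; apply: measure_ge0.
  by apply: integral_ge0 => r rD; apply: measure_ge0.
rewrite -(cvg_lim (@ereal_hausdorff R) S); apply: lime_le.
  exact: (cvgP _ S).
near=> n; have := hB n (hn n); by rewrite /mom (layer hp).
Unshelve. all: by end_near. Qed.
End main.

Theorem lemma25 (R : realType) (eps B : R) (heps : 0 < eps) (hB : 0 < B)
  (mu : probability R R) :
  exists z : R, 0 <= z /\
    exists eta : probability R R,
      inL eps B eta /\
      (forall x : R, cdfP eta x = Gz (cdfP mu) z x) /\
      (forall eta' : probability R R, inL eps B eta' ->
         (kdist (cdfP mu) (cdfP eta) <= kdist (cdfP mu) (cdfP eta'))%E).
Proof.
pose p := 1 + eps.
have hp : 0 < p by rewrite /p addr_gt0.
pose S := [set z : R | exists h : 0 <= z, (mom p (etaG mu h) <= B%:E)%E].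
have S1 : S 1.
  exists (@ler01 R); rewrite (mom1 hp) lee_fin; exact: ltW.
have Sne : S !=set0 by exists 1.
have Slb : lbound S 0 by move=> z [h _].
have hlb : has_lbound S by exists 0.
have z0ge : 0 <= inf S := lb_le_inf Sne Slb.
have Sz0 : (mom p (etaG mu z0ge) <= B%:E)%E.
  apply: (lemC hp) => n hn.
  have [y [hy my] ylt] : exists2 y, S y & y < inf S + n.+1%:R^-1.
    by apply: inf_lt => //; rewrite ltrDl invr_gt0.
  apply: le_trans my; apply: (lemA hp) => x.
  rewrite cdfP_etaG; apply: le_trans (Gz_close mu x hy) _.
  exact: ltW.
exists (inf S); split => //.
exists (etaG mu z0ge); split; first exact: Sz0.
split; first by move=> x; rewrite cdfP_etaG.
move=> eta' heta'.
have k1 : (kdist (cdfP mu) (cdfP (etaG mu z0ge)) <= (inf S)%:E)%E.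
  apply: ge_ereal_sup => _ [x _ <-]; rewrite lee_fin cdfP_etaG.
  exact: Gz_close.
apply: le_trans k1 _.
have ub x : ((`|cdfP mu x - cdfP eta' x|)%:E <= kdist (cdfP mu) (cdfP eta'))%E.
  by apply: ereal_sup_ubound; exists x.
case E: (kdist (cdfP mu) (cdfP eta')) => [d| |]; last 2 first.
- exact: leey.
- by have := ub 0; rewrite E.
have hd x : `|cdfP mu x - cdfP eta' x| <= d by rewrite -lee_fin -E.
have d0 : 0 <= d := le_trans (normr_ge0 _) (hd 0).
have Sd : S d by exists d0; apply: le_trans (lemA hp d0 hd) heta'.
by rewrite lee_fin; apply: ge_inf.
Qed.
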